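(* Let $p$ be a prime and $A_*$ a graded commutative algebra over $\mathbb F_p$. Then $D_1(G_p(A_* ))=\Gamma_1(G_p(A_* ))\subset G_p^{(0.5)}(A_* )$, and for every positive integer $k$, $$D_{k+1}(G_p(A_* ))\subset G_p^{(2k)}(A_* ),\qquad \Gamma_{k+1}(G_p(A_* ))\subset G_p^{(k+0.5)}(A_* ).$$
   Context: Graded commutative means $ab=(-1)^{\deg a\deg b}ba$. If $p=2$, $G_2(A_* )$ is the set of power series $\alpha(X)=\sum_{i\ge0}\alpha_iX^{2^i}\in A_*[[X]]$ ($X$ of degree $-1$) with $\alpha_i\in A_{2^i-1}$ and $\alpha_0=1$; in this case put $\epsilon=0$. If $p$ is odd, let $\epsilon$ have degree $-1$ with $\epsilon^2=0$, $X$ degree $-2$, and $G_p(A_* )$ is the set of $\alpha(X)=\sum_{i\ge0}\alpha_iX^{p^i}\in (A_*\otimes_{\mathbb F_p}\mathbb F_p[\epsilon]/(\epsilon^2))[[X]]$ with $\alpha_i$ homogeneous of degree $2(p^i-1)$ and $\alpha_0-1\in(\epsilon)$. The group law is $\alpha(X)\cdot\beta(X)=\beta(\alpha(X))$, i.e. the coefficient of $X^{p^i}$ in $\alpha\cdot\beta$ is $\sum_{j=0}^i\alpha_{i-j}^{p^j}\beta_j$; the identity is $X$. For an integer $k\ge0$, $G_p^{(k)}(A_* )$ is the subgroup of elements of the form $X+\sum_{i\ge k+1}\alpha_iX^{p^i}$, and $G_p^{(k+0.5)}(A_* )$ is the subgroup of elements of the form $X+\sum_{i\ge k+1}\alpha_iX^{p^i}$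 with $\alpha_{k+1}\in(\epsilon)$. For a group $G$, $D_0(G)=\Gamma_0(G)=G$, $D_{k+1}(G)=[D_k(G),D_k(G)]$ and $\Gamma_{k+1}(G)=[\Gamma_k(G),G]$, where $[H,K]$ is the subgroup generated by commutators. *)

(* Defs.v *)
From mathcomp Require Import all_boot all_order all_algebra.
From Stdlib Require Import ClassicalEpsilon.
Set Implicit Arguments. Unset Strict Implicit. Unset Printing Implicit Defensive.
Import GRing.Theory Num.Theory.
Local Open Scope ring_scope.

Section GradedGroup.
Variable R : pzRingType.

(* A_*  : a Z-graded ring R = (+)_n A n which is graded commutative.
   (Being an F_p-algebra is the separate hypothesis p%:R = 0.) *)
Definition graded_comm_alg (A : int -> {pred R}) : Prop :=
  [/\ (forall n, 0 \in A n /\ forall x y, x \in A n -> y \in A n -> x - y \in A n)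
      /\ 1 \in A 0,
      (forall m n x y, x \in A m -> y \in A n -> x * y \in A (m + n)),
      (forall x : R, exists (s : seq int) (f : int -> R),
          (forall n, f n \in A n) /\ x = \sum_(n <- s) f n),
      (forall (s : seq int) (f : int -> R), uniq s -> (forall n, f n \in A n) ->
          \sum_(n <- s) f n = 0 -> forall n, n \in s -> f n = 0) &
      (forall m n x y, x \in A m -> y \in A n ->
          x * y = (-1) ^+ absz (m * n) * (y * x))].

(* An element a + b*eps of A_*  (x) F_p[eps]/(eps^2) is the pair (a, b).
   For homogeneous elements of even total degree (the only ones occurring
   in G_p), eps commutes with them, and the product is the one below. *)
Definition dmul (x y : R * R) : R * R := (x.1 * y.1, x.1 * y.2 + x.2 * y.1).
Definition dexp (x : R * R) (n : nat) : R * R := iter n (dmul x) (1, 0).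

(* A power series sum_i alpha_i X^(p^i) is its coefficient sequence. *)
Definition ser := nat -> R * R.

Definition inG (p : nat) (A : int -> {pred R}) (al : ser) : Prop :=
  if p == 2%N then
    (al 0%N).1 = 1 /\ forall i, (al i).2 = 0 /\ (al i).1 \in A (2 ^ i - 1)%N%:Z
  else
    (al 0%N).1 = 1 /\ forall i, (al i).1 \in A (2 * (p ^ i - 1))%N%:Z /\
                                (al i).2 \in A (2 * (p ^ i - 1)).+1%N%:Z.

Definition Gmul (p : nat) (al be : ser) : ser := fun i =>
  (\sum_(j < i.+1) (dmul (dexp (al (i - j)%N) (p ^ j)) (be j)).1,
   \sum_(j < i.+1) (dmul (dexp (al (i - j)%N) (p ^ j)) (be j)).2).

Definition Gone : ser := fun i => if i == 0%N then (1, 0) else (0, 0).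

Lemma Gone_inh : inhabited ser. Proof. exact: inhabits Gone. Qed.

(* group inverse (chosen; unique since G_p(A) is a group) *)
Definition Ginv (p : nat) (A : int -> {pred R}) (al : ser) : ser :=
  epsilon Gone_inh (fun be => inG p A be /\ Gmul p al be = Gone).

Definition Gcomm p A (x y : ser) : ser :=
  Gmul p (Gmul p (Ginv p A x) (Ginv p A y)) (Gmul p x y).

Definition is_subgroup p A (H : ser -> Prop) : Prop :=
  [/\ forall x, H x -> inG p A x,
      H Gone,
      (forall x y, H x -> H y -> H (Gmul p x y)) &
      (forall x, H x -> H (Ginv p A x))].

Definition gen p A (S : ser -> Prop) : ser -> Prop :=
  fun x => forall H, is_subgroup p A H -> (forall y, S y -> H y) -> H x.

Definition commg p A (H K : ser -> Prop) : ser -> Prop :=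
  gen p A (fun c => exists x y, [/\ H x, K y & c = Gcomm p A x y]).

Fixpoint Dser p A (k : nat) : ser -> Prop :=
  if k is k'.+1 then commg p A (Dser p A k') (Dser p A k') else inG p A.
Fixpoint Gser p A (k : nat) : ser -> Prop :=
  if k is k'.+1 then commg p A (Gser p A k') (inG p A) else inG p A.

Definition Gfilt p A (k : nat) (al : ser) : Prop :=
  inG p A al /\ al 0%N = (1, 0) /\ forall i, (1 <= i <= k)%N -> al i = (0, 0).

(* G_p^(k+0.5): additionally alpha_(k+1) in (eps) *)
Definition Gfilt_half p A (k : nat) (al : ser) : Prop :=
  Gfilt p A k al /\ (al k.+1).1 = 0.

End GradedGroup.

(* Main.v *)
Require Import Defs.
From mathcomp Require Import all_boot all_order all_algebra.
From Stdlib Require Import ClassicalEpsilon.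
From mathcomp Require Import zify.
From Stdlib Require Import FunctionalExtensionality.
Set Implicit Arguments. Unset Strict Implicit. Unset Printing Implicit Defensive.
Import GRing.Theory Num.Theory.
Local Open Scope ring_scope.

Section Main.
Variable p : nat.
Variable R : pzRingType.
Variable A : int -> {pred R}.
Hypothesis pr : prime p.
Hypothesis pR : (p%:R : R) = 0.

Definition central (c : R) := forall r, GRing.comm c r.

Lemma central0 : central 0. Proof. by move=> r; rewrite /GRing.comm mul0r mulr0. Qed.
Lemma central1 : central 1. Proof. by move=> r; rewrite /GRing.comm mul1r mulr1. Qed.
Lemma centralD x y : central x -> central y -> central (x + y).
Proof. by move=> cx cy r; rewrite /GRing.comm mulrDl mulrDr cx cy. Qed.
Lemma centralN x : central x -> central (- x).
Proof. by move=> cx r; rewrite /GRing.comm mulNr mulrN cx. Qed.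
Lemma centralM x y : central x -> central y -> central (x * y).
Proof. by move=> cx cy r; rewrite /GRing.comm -mulrA cy mulrA cx mulrA. Qed.
Lemma centralX x n : central x -> central (x ^+ n).
Proof. move=> cx; elim: n => [|n IH]; first exact: central1. by rewrite exprS; apply: centralM. Qed.
Lemma central_sum n (F : 'I_n -> R) : (forall k, central (F k)) -> central (\sum_(k < n) F k).
Proof.
move=> cF; elim/big_ind: _ => //; [exact: central0| exact: centralD].
Qed.

Lemma p_gt0 : (0 < p)%N. Proof. exact: prime_gt0. Qed.

Lemma natp_mul_eq0 (x : R) : x *+ p = 0.
Proof. by rewrite -mulr_natr pR mulr0. Qed.

Lemma natpX_eq0 (x : R) j : (0 < j)%N -> x *+ (p ^ j) = 0.
Proof. by case: j => // j _; rewrite expnS mulrnA natp_mul_eq0 mul0rn. Qed.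

Lemma frobD (x y : R) : GRing.comm x y -> (x + y) ^+ p = x ^+ p + y ^+ p.
Proof.
move=> cxy.
have defp := prednK p_gt0.
rewrite exprDn_comm // big_ord_recr subnn -defp big_ord_recl /= defp.
rewrite subn0 mulr1 mul1r bin0 binn big1 ?addr0 // => i _.
have /dvdnP [q ->] : (p %| 'C(p, (bump 0 i)))%N.
  by apply: prime_dvd_bin => //=; rewrite -[X in (_ < X)%N]defp /bump leq0n add1n ltnS (valP i).
by rewrite mulrnA natp_mul_eq0.
Qed.

Lemma frobXD (x y : R) j : GRing.comm x y -> (x + y) ^+ (p ^ j) = x ^+ (p ^ j) + y ^+ (p ^ j).
Proof.
move=> cxy; elim: j => [|j IH]; first by rewrite !expn0 !expr1.
by rewrite expnSr !exprM IH frobD //; apply: commrX; apply: commr_sym; apply: commrX; apply: commr_sym.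
Qed.

Lemma frob_sum j n (F : 'I_n -> R) : (forall k, central (F k)) ->
  (\sum_(k < n) F k) ^+ (p ^ j) = \sum_(k < n) F k ^+ (p ^ j).
Proof.
elim: n F => [|n IH] F cF.
  by rewrite !big_ord0 expr0n expn_eq0 eqn0Ngt p_gt0.
rewrite !big_ord_recr /= frobXD; last by apply: commr_sym; apply: (cF ord_max).
by rewrite IH // => k; apply: cF.
Qed.

Definition cmp (a b : nat -> R) (i : nat) : R :=
  \sum_(j < i.+1) a (i - j)%N ^+ (p ^ j) * b j.

Lemma dexpE (x : R * R) n : GRing.comm x.1 x.2 ->
  dexp x n = (x.1 ^+ n, x.1 ^+ n.-1 * x.2 *+ n).
Proof.
move=> cx; elim: n => [|n IH]; first by rewrite /dexp /= mulr0n.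
rewrite /dexp iterS -/(dexp x n) IH /dmul /=; congr (_, _); first by rewrite exprS.
case: n {IH} => [|n] /=; first by rewrite mulr0n mulr0 add0r expr0 mulr1 mul1r.
rewrite mulrnAr mulrA -exprS (mulrS _ n.+1) addrC; congr (_ + _).
by rewrite (commrX n.+1 (commr_sym cx)).
Qed.

Lemma dexp_pj (x : R * R) j : GRing.comm x.1 x.2 ->
  dexp x (p ^ j) = (x.1 ^+ (p ^ j), if j == 0%N then x.2 else 0).
Proof.
move=> cx; rewrite dexpE //; congr (_, _); case: j => [|j] /=.
  by rewrite expn0 expr0 mul1r.
by rewrite natpX_eq0.
Qed.

Lemma Gmul_eq (a b : ser R) i : (forall k, GRing.comm (a k).1 (a k).2) ->
  Gmul p a b i = (cmp (fun k => (a k).1) (fun k => (b k).1) i,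
                  cmp (fun k => (a k).1) (fun k => (b k).2) i + (a i).2 * (b 0%N).1).
Proof.
move=> ca; rewrite /Gmul; congr (_, _).
  by apply: eq_bigr => j _; rewrite dexp_pj.
rewrite /cmp.
under eq_bigr => j _ do rewrite dexp_pj //=.
rewrite big_split /=; congr (_ + _).
rewrite big_ord_recl /= subn0 big1 ?addr0 // => j _.
by rewrite mul0r.
Qed.


Lemma cmp_last (a b : nat -> R) i : a 0%N = 1 ->
  cmp a b i = \sum_(j < i) a (i - j)%N ^+ (p ^ j) * b j + b i.
Proof. by move=> a0; rewrite /cmp big_ord_recr /= subnn a0 expr1n mul1r. Qed.

Lemma cmp_first (a b : nat -> R) i :
  cmp a b i = a i * b 0%N + \sum_(j < i) a (i - j.+1)%N ^+ (p ^ j.+1) * b j.+1.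
Proof. by rewrite /cmp big_ord_recl /= subn0 expn0 expr1. Qed.

Lemma eq_cmp (a b c : nat -> R) i : (forall j, (j <= i)%N -> b j = c j) ->
  cmp a b i = cmp a c i.
Proof. by move=> H; apply: eq_bigr => j _; rewrite H // -ltnS. Qed.

Lemma cmpD (a b c : nat -> R) i : cmp a (fun k => b k + c k) i = cmp a b i + cmp a c i.
Proof. by rewrite /cmp -big_split; apply: eq_bigr => j _; rewrite mulrDr. Qed.

Lemma cmpMr (a b : nat -> R) r i : cmp a (fun k => b k * r) i = cmp a b i * r.
Proof. by rewrite /cmp mulr_suml; apply: eq_bigr => j _; rewrite mulrA. Qed.

Lemma cmp_central (a b : nat -> R) i : (forall k, central (a k)) -> (forall k, central (b k)) ->
  central (cmp a b i).
Proof.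
move=> ca cb; apply: central_sum => j; apply: centralM; [apply: centralX|]; done.
Qed.

Lemma sum_shift (F : nat -> R) i j : (j <= i)%N ->
  \sum_(k < (i - j).+1) F (k + j)%N = \sum_(0 <= l < i.+1) (if (j <= l)%N then F l else 0).
Proof.
move=> ji; rewrite -big_mkcond /= (eq_bigl (fun l => xpredT l && (j <= l)%N)) //.
rewrite -(@big_nat_widenl _ _ _ j 0 i.+1 xpredT F (leq0n j)) /=.
have := big_addn 0 i.+1 j xpredT F; rewrite add0n => ->.
rewrite -subSn // big_mkord.
by apply: eq_bigr.
Qed.

Lemma cmp_assoc (a b c : nat -> R) i : (forall k, central (a k)) -> (forall k, central (b k)) ->
  cmp (cmp a b) c i = cmp a (cmp b c) i.
Proof.
move=> ca cb.
pose T j l := a (i - l)%N ^+ (p ^ l) * b (l - j)%N ^+ (p ^ j) * c j.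
transitivity (\sum_(0 <= j < i.+1) \sum_(0 <= l < i.+1) (if (j <= l)%N then T j l else 0)).
  rewrite big_mkord; apply: eq_bigr => j _.
  have ji : (j <= i)%N by rewrite -ltnS.
  rewrite frob_sum; last by move=> k; apply: centralM; [apply: centralX|].
  rewrite mulr_suml -(sum_shift (T j) ji).
  apply: eq_bigr => k _; rewrite /T exprMn_comm; last by apply: centralX.
  by rewrite -exprM -expnD addnK (addnC k j) subnDA.
rewrite exchange_big_nat /cmp big_mkord; apply: eq_bigr => l _.
have li : (l < i.+1)%N by [].
rewrite mulr_sumr -big_mkcond /= (eq_bigl (fun j => xpredT j && (j < l.+1)%N)) //.
rewrite -(big_nat_widen _ _ _ _ _ li) big_mkord.
by apply: eq_bigr => j _; rewrite /T mulrA.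
Qed.


Hypothesis gc : graded_comm_alg A.

Lemma A0 n : 0 \in A n. Proof. by case: gc => [[H _] _ _ _ _]; case: (H n). Qed.
Lemma AB n x y : x \in A n -> y \in A n -> x - y \in A n.
Proof. by case: gc => [[H _] _ _ _ _]; case: (H n) => _; apply. Qed.
Lemma AN n x : x \in A n -> - x \in A n.
Proof. by move=> h; rewrite -sub0r; apply: AB => //; apply: A0. Qed.
Lemma AD n x y : x \in A n -> y \in A n -> x + y \in A n.
Proof. by move=> hx hy; rewrite -(opprK y); apply: AB => //; apply: AN. Qed.
Lemma A1 : 1 \in A 0. Proof. by case: gc => [[_ H] _ _ _ _]. Qed.
Lemma AM m n x y : x \in A m -> y \in A n -> x * y \in A (m + n).
Proof. by case: gc => [_ H _ _ _]; apply: H. Qed.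
Lemma AMn (m n : nat) x y : x \in A m%:Z -> y \in A n%:Z -> x * y \in A (m + n)%N%:Z.
Proof. by rewrite PoszD; apply: AM. Qed.
Lemma AX (m : nat) x k : x \in A m%:Z -> x ^+ k \in A (m * k)%N%:Z.
Proof.
move=> hx; elim: k => [|k IH]; first by rewrite muln0 expr0; apply: A1.
by rewrite exprS mulnS; apply: AMn.
Qed.
Lemma A_sum n (I : finType) (P : pred I) (F : I -> R) :
  (forall k, P k -> F k \in A n) -> \sum_(k | P k) F k \in A n.
Proof. by move=> H; elim/big_ind: _ => //; [apply: A0 | apply: AD]. Qed.

Lemma central_hom m x : x \in A m -> (forall n, (-1) ^+ (absz (m * n)) = 1 :> R) -> central x.
Proof.
move=> hx hs r.
case: gc => [_ _ dec _ gcomm].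
have [s [f [hf ->]]] := dec r.
rewrite /GRing.comm mulr_sumr mulr_suml; apply: eq_bigr => n _.
by rewrite (gcomm _ _ _ _ hx (hf n)) hs mul1r.
Qed.

Lemma m1_p2 : p = 2%N -> (-1 : R) = 1.
Proof.
move=> p2; apply/eqP; rewrite eq_sym -addr_eq0; apply/eqP.
by have := pR; rewrite p2.
Qed.

Definition d (i : nat) : nat := if p == 2%N then (2 ^ i - 1)%N else (2 * (p ^ i - 1))%N.
Definition Pd (n : nat) (r : R) : Prop := if p == 2%N then r = 0 else r \in A n%:Z.
Definition DG (i : nat) (z : R * R) : Prop := z.1 \in A (d i)%:Z /\ Pd (d i).+1 z.2.

Lemma d0 : d 0 = 0%N. Proof. by rewrite /d; case: ifP. Qed.

Lemma dsum i j : (j <= i)%N -> (d (i - j) * p ^ j + d j)%N = d i.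
Proof.
move=> ji.
have PQ : (p ^ i = p ^ (i - j) * p ^ j)%N by rewrite -expnD subnK.
have P1 : (0 < p ^ (i - j))%N by rewrite expn_gt0 p_gt0.
have Q1 : (0 < p ^ j)%N by rewrite expn_gt0 p_gt0.
rewrite /d; case: eqP => [p2|_]; rewrite ?p2 in PQ P1 Q1 *; rewrite PQ;
  move: P1 Q1; move: (_ ^ (i - j))%N (_ ^ j)%N => P Q P1 Q1; nia.
Qed.


Lemma Pd0 n : Pd n 0. Proof. by rewrite /Pd; case: ifP => _ //; apply: A0. Qed.
Lemma PdD n x y : Pd n x -> Pd n y -> Pd n (x + y).
Proof. by rewrite /Pd; case: ifP => _; [move=> -> ->; rewrite addr0 | apply: AD]. Qed.
Lemma PdN n x : Pd n x -> Pd n (- x).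
Proof. by rewrite /Pd; case: ifP => _; [move=> ->; rewrite oppr0 | apply: AN]. Qed.
Lemma Pd_sum n k (F : 'I_k -> R) : (forall j, Pd n (F j)) -> Pd n (\sum_(j < k) F j).
Proof. by move=> H; elim/big_ind: _ => //; [apply: Pd0 | apply: PdD]. Qed.
Lemma PdMl (m n : nat) a r : a \in A m%:Z -> Pd n r -> Pd (m + n) (a * r).
Proof. by rewrite /Pd; case: ifP => _; [move=> _ ->; rewrite mulr0 | apply: AMn]. Qed.
Lemma PdMr (m n : nat) a r : Pd n r -> a \in A m%:Z -> Pd (n + m) (r * a).
Proof. by rewrite /Pd; case: ifP => _; [move=> -> _; rewrite mul0r | apply: AMn]. Qed.

Lemma inG_iff (x : ser R) : inG p A x <-> (x 0%N).1 = 1 /\ forall i, DG i (x i).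
Proof.
rewrite /inG /DG /Pd /d; case: ifP => _; split; case=> h1 h2; split => // i; case: (h2 i) => //.
Qed.

Lemma DG_central i z : DG i z -> central z.1.
Proof.
case=> h _; apply: (central_hom h) => n.
rewrite /d; case: eqP => [p2|_].
  by rewrite (m1_p2 p2) expr1n.
by rewrite abszM -mulnA /= exprM sqrrN expr1n expr1n.
Qed.

Lemma inG_central (x : ser R) i : inG p A x -> central (x i).1.
Proof. by case/inG_iff => _ h; apply: (DG_central (h i)). Qed.

Lemma inG_comm (x : ser R) : inG p A x -> forall k, GRing.comm (x k).1 (x k).2.
Proof. by move=> h k; apply: inG_central. Qed.

Lemma DG_cmp1 (a b : nat -> R) i : (forall k, a k \in A (d k)%:Z) -> (forall k, b k \in A (d k)%:Z) ->
  cmp a b i \in A (d i)%:Z.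
Proof.
move=> ha hb; apply: A_sum => j _.
rewrite -(dsum (ltn_ord j : (j <= i)%N)); apply: AMn; [apply: AX; apply: ha | apply: hb].
Qed.

Lemma DG_cmp2 (a b : nat -> R) i : (forall k, a k \in A (d k)%:Z) -> (forall k, Pd (d k).+1 (b k)) ->
  Pd (d i).+1 (cmp a b i).
Proof.
move=> ha hb; apply: Pd_sum => j.
rewrite -(dsum (ltn_ord j : (j <= i)%N)) -addnS; apply: PdMl; [apply: AX; apply: ha | apply: hb].
Qed.

Lemma Gmul_inG (x y : ser R) : inG p A x -> inG p A y -> inG p A (Gmul p x y).
Proof.
move=> hx hy; have cx := inG_comm hx.
case/inG_iff: (hx) => x0 hx'; case/inG_iff: (hy) => y0 hy'.
apply/inG_iff; split.
  by rewrite Gmul_eq //= cmp_last ?big_ord0 ?add0r.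
move=> i; rewrite Gmul_eq //; split => /=.
  by apply: DG_cmp1 => k; [case: (hx' k) | case: (hy' k)].
apply: PdD.
  by apply: DG_cmp2 => k; [case: (hx' k) | case: (hy' k)].
case: (hx' i) => _ h2; case: (hy' 0%N) => h1 _; rewrite d0 in h1; have := PdMr h2 h1; by rewrite addn0.
Qed.


Lemma Gone_eq i : (Gone R) i = ((i == 0%N)%:R, 0).
Proof. by rewrite /Gone; case: i. Qed.

Lemma Gone_inG : inG p A (Gone R).
Proof.
apply/inG_iff; split; first by rewrite Gone_eq.
move=> i; rewrite Gone_eq /DG /=; split; last exact: Pd0.
by case: i => [|i] /=; [rewrite d0; apply: A1 | apply: A0].
Qed.

Lemma Gone_comm k : GRing.comm ((Gone R) k).1 ((Gone R) k).2.
Proof. by rewrite Gone_eq /GRing.comm /= mulr0 mul0r. Qed.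

Lemma Gmul_1l (x : ser R) : Gmul p (Gone R) x = x.
Proof.
apply: functional_extensionality => i; rewrite Gmul_eq; last exact: Gone_comm.
rewrite !cmp_last ?Gone_eq //= big1 ?add0r; last first.
  by move=> j _; rewrite Gone_eq /= subn_eq0 leqNgt ltn_ord /= expr0n expn_eq0 eqn0Ngt p_gt0 /= mul0r.
rewrite big1 ?add0r ?mul0r ?addr0; first by case: (x i).
by move=> j _; rewrite Gone_eq /= subn_eq0 leqNgt ltn_ord /= expr0n expn_eq0 eqn0Ngt p_gt0 /= mul0r.
Qed.

Lemma Gmul_1r (x : ser R) : (forall k, GRing.comm (x k).1 (x k).2) -> Gmul p x (Gone R) = x.
Proof.
move=> cx; apply: functional_extensionality => i; rewrite Gmul_eq //.
rewrite !cmp_first /= !big1 ?addr0 ?mulr0 ?mulr1 ?add0r ?addr0; first by case: (x i).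
  all: by move=> j _; rewrite mulr0.
Qed.

Lemma Gmul_assoc (x y z : ser R) : inG p A x -> inG p A y ->
  Gmul p (Gmul p x y) z = Gmul p x (Gmul p y z).
Proof.
move=> hx hy; have cx := inG_comm hx; have cy := inG_comm hy.
have cxy := inG_comm (Gmul_inG hx hy).
have y0 : (y 0%N).1 = 1 by case/inG_iff: hy.
apply: functional_extensionality => i.
rewrite Gmul_eq // Gmul_eq // Gmul_eq //.
have E1 : (fun k => (Gmul p x y k).1) = cmp (fun k => (x k).1) (fun k => (y k).1).
  by apply: functional_extensionality => k; rewrite Gmul_eq.
have E2 : (fun k => (Gmul p y z k).1) = cmp (fun k => (y k).1) (fun k => (z k).1).
  by apply: functional_extensionality => k; rewrite Gmul_eq.
have E3 : (fun k => (Gmul p y z k).2) = (fun k => cmp (fun k => (y k).1) (fun k => (z k).2) k + (y k).2 * (z 0%N).1).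
  by apply: functional_extensionality => k; rewrite Gmul_eq.
rewrite E1 E2 E3 Gmul_eq //=.
have ca : forall k, central (x k).1 by move=> k; apply: inG_central.
have cb : forall k, central (y k).1 by move=> k; apply: inG_central.
rewrite cmp_assoc //; congr (_, _).
rewrite cmp_assoc // cmpD cmpMr [cmp (fun k => (y k).1) _ 0]cmp_last // big_ord0 add0r y0 mulr1.
by rewrite mulrDl addrA.
Qed.


Section Inv.
Variable x : ser R.

Definition nextval (s : seq (R * R)) : R * R :=
  ((size s == 0%N)%:R - \sum_(j < size s) (x (size s - j)%N).1 ^+ (p ^ j) * (nth (0, 0) s j).1,
   - (\sum_(j < size s) (x (size s - j)%N).1 ^+ (p ^ j) * (nth (0, 0) s j).2 + (x (size s)).2)).

Definition build n := iter n (fun s => rcons s (nextval s)) [::].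
Definition invs i := nth (0, 0) (build i.+1) i.

Lemma size_build n : size (build n) = n.
Proof. by elim: n => //= n IH; rewrite size_rcons IH. Qed.

Lemma build_mkseq n : build n = mkseq invs n.
Proof.
elim: n => // n IH.
have -> : mkseq invs n.+1 = rcons (mkseq invs n) (invs n).
  by rewrite /mkseq -addn1 iotaD map_cat /= cats1.
rewrite -IH /= /invs /=; congr rcons.
by rewrite nth_rcons size_build ltnn eqxx.
Qed.

Lemma invs_rec i : invs i = nextval (mkseq invs i).
Proof. by rewrite /invs /= nth_rcons size_build ltnn eqxx build_mkseq. Qed.

Lemma invs1 i : (invs i).1 = (i == 0%N)%:R - \sum_(j < i) (x (i - j)%N).1 ^+ (p ^ j) * (invs j).1.
Proof.
rewrite invs_rec /nextval size_mkseq; congr (_ - _).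
by apply: eq_bigr => j _; rewrite nth_mkseq.
Qed.

Lemma invs2 i : (invs i).2 = - (\sum_(j < i) (x (i - j)%N).1 ^+ (p ^ j) * (invs j).2 + (x i).2).
Proof.
rewrite invs_rec /nextval size_mkseq; congr (- (_ + _)).
by apply: eq_bigr => j _; rewrite nth_mkseq.
Qed.

Lemma invs_inG : inG p A x -> inG p A invs.
Proof.
case/inG_iff => x0 hx; apply/inG_iff; split.
  by rewrite invs1 big_ord0 subr0.
have H : forall n i, (i < n)%N -> DG i (invs i).
  elim=> // n IH i; rewrite ltnS leq_eqVlt => /orP [/eqP -> | ]; last exact: IH.
  split.
    rewrite invs1; apply: AB.
      by case: n {IH} => [|n] /=; [rewrite d0; apply: A1 | apply: A0].
    apply: A_sum => j _; rewrite -(dsum (ltnW (ltn_ord j))); apply: AMn.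
      by apply: AX; case: (hx (n - j)%N).
    by case: (IH j (ltn_ord j)).
  rewrite invs2; apply: PdN; apply: PdD; last by case: (hx n).
  apply: Pd_sum => j; rewrite -(dsum (ltnW (ltn_ord j))) -addnS; apply: PdMl.
    by apply: AX; case: (hx (n - j)%N).
  by case: (IH j (ltn_ord j)).
by move=> i; apply: (H i.+1).
Qed.

Lemma invs_r : inG p A x -> Gmul p x invs = Gone R.
Proof.
move=> hx; have cx := inG_comm hx; have x0 : (x 0%N).1 = 1 by case/inG_iff: hx.
apply: functional_extensionality => i; rewrite Gmul_eq // Gone_eq !cmp_last //.
congr (_, _).
  by rewrite invs1 addrC subrK.
rewrite invs2 invs1 big_ord0 subr0 /= mulr1.
by rewrite opprD addrA subrr add0r addNr.
Qed.

End Inv.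

Lemma Ginv_spec (x : ser R) : inG p A x -> inG p A (Ginv p A x) /\ Gmul p x (Ginv p A x) = Gone R.
Proof.
move=> hx; rewrite /Ginv; apply: (@epsilon_spec _ (Gone_inh R) (fun be => inG p A be /\ Gmul p x be = Gone R)).
by exists (invs x); split; [apply: invs_inG | apply: invs_r].
Qed.


Lemma Ginv_inG (x : ser R) : inG p A x -> inG p A (Ginv p A x).
Proof. by case/Ginv_spec. Qed.
Lemma Ginv_r (x : ser R) : inG p A x -> Gmul p x (Ginv p A x) = Gone R.
Proof. by case/Ginv_spec. Qed.

Lemma Ginv_l (x : ser R) : inG p A x -> Gmul p (Ginv p A x) x = Gone R.
Proof.
move=> hx; have hy := Ginv_inG hx; have hz := Ginv_inG hy.
have E : x = Ginv p A (Ginv p A x).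
  transitivity (Gmul p x (Gmul p (Ginv p A x) (Ginv p A (Ginv p A x)))).
    by rewrite Ginv_r // Gmul_1r //; apply: inG_comm.
  by rewrite -Gmul_assoc // Ginv_r // Gmul_1l.
by rewrite {2}E Ginv_r.
Qed.

Lemma Gcomm_eq (x y : ser R) : inG p A x -> inG p A y ->
  Gmul p (Gmul p y x) (Gcomm p A x y) = Gmul p x y.
Proof.
move=> hx hy; have hx' := Ginv_inG hx; have hy' := Ginv_inG hy.
rewrite /Gcomm -Gmul_assoc; try apply: Gmul_inG => //.
rewrite (Gmul_assoc _ hy hx) -(Gmul_assoc _ hx hx') Ginv_r // Gmul_1l Ginv_r //.
exact: Gmul_1l.
Qed.

Lemma Gcomm_inG (x y : ser R) : inG p A x -> inG p A y -> inG p A (Gcomm p A x y).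
Proof.
by move=> hx hy; rewrite /Gcomm; apply: Gmul_inG; apply: Gmul_inG => //; apply: Ginv_inG.
Qed.

Definition agF n (u v : ser R) := forall i, (i < n)%N -> u i = v i.
Definition agH n (u v : ser R) := agF n u v /\ (u n).1 = (v n).1.

Lemma agF_sym n u v : agF n u v -> agF n v u.
Proof. by move=> h i hi; rewrite h. Qed.
Lemma agF_trans n u v w : agF n u v -> agF n v w -> agF n u w.
Proof. by move=> h1 h2 i hi; rewrite h1 // h2. Qed.
Lemma agH_sym n u v : agH n u v -> agH n v u.
Proof. by case=> h1 h2; split; [apply: agF_sym | rewrite h2]. Qed.
Lemma agH_trans n u v w : agH n u v -> agH n v w -> agH n u w.
Proof. by case=> h1 h2 [h3 h4]; split; [apply: agF_trans h3 | rewrite h2]. Qed.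

Lemma Gmul_agF_r n (z b c : ser R) : inG p A z -> agF n b c -> agF n (Gmul p z b) (Gmul p z c).
Proof.
move=> hz h i hi; have cz := inG_comm hz.
rewrite !Gmul_eq //; congr (_, _).
  by apply: eq_cmp => j ji; rewrite h //; apply: leq_ltn_trans hi; exact: ji.
rewrite (h 0%N); last by apply: leq_ltn_trans hi.
congr (_ + _); apply: eq_cmp => j ji; rewrite h //; apply: leq_ltn_trans hi; exact: ji.
Qed.

Lemma Gmul_agH_r n (z b c : ser R) : inG p A z -> agH n b c -> agH n (Gmul p z b) (Gmul p z c).
Proof.
move=> hz [h h']; split; first exact: Gmul_agF_r.
have cz := inG_comm hz; rewrite !Gmul_eq //=.
apply: eq_cmp => j; rewrite leq_eqVlt => /orP [/eqP -> // | ji].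
by rewrite h.
Qed.

Lemma L_F n (u w : ser R) : inG p A u -> inG p A w -> agF n (Gmul p u w) u -> agF n w (Gone R).
Proof.
move=> hu hw h.
have -> : w = Gmul p (Ginv p A u) (Gmul p u w).
  by rewrite -Gmul_assoc ?Ginv_l ?Gmul_1l //; apply: Ginv_inG.
rewrite -(Ginv_l hu); apply: Gmul_agF_r => //; apply: Ginv_inG => //.
Qed.

Lemma L_H n (u w : ser R) : inG p A u -> inG p A w -> agH n (Gmul p u w) u -> agH n w (Gone R).
Proof.
move=> hu hw h.
have -> : w = Gmul p (Ginv p A u) (Gmul p u w).
  by rewrite -Gmul_assoc ?Ginv_l ?Gmul_1l //; apply: Ginv_inG.
rewrite -(Ginv_l hu); apply: Gmul_agH_r => //; apply: Ginv_inG => //.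
Qed.

Lemma comm_F n (x y : ser R) : inG p A x -> inG p A y ->
  agF n (Gmul p x y) (Gmul p y x) -> agF n (Gcomm p A x y) (Gone R).
Proof.
move=> hx hy h; apply: (L_F (u := Gmul p y x)); first exact: Gmul_inG.
  exact: Gcomm_inG.
by rewrite Gcomm_eq.
Qed.

Lemma comm_H n (x y : ser R) : inG p A x -> inG p A y ->
  agH n (Gmul p x y) (Gmul p y x) -> agH n (Gcomm p A x y) (Gone R).
Proof.
move=> hx hy h; apply: (L_H (u := Gmul p y x)); first exact: Gmul_inG.
  exact: Gcomm_inG.
by rewrite Gcomm_eq.
Qed.

Lemma subgroup_F n : is_subgroup p A (fun x => inG p A x /\ agF n x (Gone R)).
Proof.
split.
- by move=> x [].
- by split; [apply: Gone_inG | move=> i].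
- move=> x y [hx ax] [hy ay]; split; first exact: Gmul_inG.
  apply: agF_trans ax; rewrite -{2}(Gmul_1r (inG_comm hx)); exact: Gmul_agF_r.
- move=> x [hx ax]; have hx' := Ginv_inG hx; split => //.
  have := Gmul_agF_r hx' (agF_sym ax).
  by rewrite (Gmul_1r (inG_comm hx')) Ginv_l.
Qed.

Lemma subgroup_H n : is_subgroup p A (fun x => inG p A x /\ agH n x (Gone R)).
Proof.
split.
- by move=> x [].
- by split; [apply: Gone_inG | split].
- move=> x y [hx ax] [hy ay]; split; first exact: Gmul_inG.
  apply: agH_trans ax; rewrite -{2}(Gmul_1r (inG_comm hx)); exact: Gmul_agH_r.
- move=> x [hx ax]; have hx' := Ginv_inG hx; split => //.
  have := Gmul_agH_r hx' (agH_sym ax).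
  by rewrite (Gmul_1r (inG_comm hx')) Ginv_l.
Qed.


Definition M (a b : nat -> R) i := \sum_(j < i.-1) a (i - j.+1)%N ^+ (p ^ j.+1) * b j.+1.

Lemma cmp_mid (a b : nat -> R) i : (0 < i)%N -> a 0%N = 1 ->
  cmp a b i = a i * b 0%N + M a b i + b i.
Proof.
case: i => // i _ a0; rewrite cmp_first /M /= big_ord_recr /= subnn a0 expr1n mul1r.
by rewrite addrA.
Qed.

Lemma M_zero (a b : nat -> R) i :
  (forall j, (0 < j)%N -> (j < i)%N -> a (i - j)%N = 0 \/ b j = 0) -> M a b i = 0.
Proof.
move=> H; rewrite /M big1 // => j _.
have ji : (j.+1 < i)%N by move: (ltn_ord j); move: (nat_of_ord j) => k; case: (i) => //.
case: (H j.+1 isT ji) => ->; last by rewrite mulr0.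
by rewrite expr0n expn_eq0 eqn0Ngt p_gt0 /= mul0r.
Qed.

Lemma Gmul0 (x y : ser R) : inG p A x -> Gmul p x y 0%N = ((y 0%N).1, (y 0%N).2 + (x 0%N).2 * (y 0%N).1).
Proof.
move=> hx; have x0 : (x 0%N).1 = 1 by case/inG_iff: hx.
by rewrite Gmul_eq ?cmp_last ?big_ord0 ?add0r //; apply: inG_comm.
Qed.

Lemma comm0 (x y : ser R) : inG p A x -> inG p A y -> Gmul p x y 0%N = Gmul p y x 0%N.
Proof.
move=> hx hy; have x0 : (x 0%N).1 = 1 by case/inG_iff: hx.
have y0 : (y 0%N).1 = 1 by case/inG_iff: hy.
by rewrite !Gmul0 // x0 y0 !mulr1 addrC.
Qed.

Lemma comm1_i (x y : ser R) i : inG p A x -> inG p A y -> (0 < i)%N ->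
  M (fun k => (x k).1) (fun k => (y k).1) i = 0 -> M (fun k => (y k).1) (fun k => (x k).1) i = 0 ->
  (Gmul p x y i).1 = (Gmul p y x i).1.
Proof.
move=> hx hy i0 m1 m2; have x0 : (x 0%N).1 = 1 by case/inG_iff: hx.
have y0 : (y 0%N).1 = 1 by case/inG_iff: hy.
rewrite !Gmul_eq /=; try apply: inG_comm => //.
by rewrite !cmp_mid // m1 m2 x0 y0 !mulr1 !addr0 addrC.
Qed.

Lemma comm2_i (x y : ser R) i : inG p A x -> inG p A y -> (0 < i)%N ->
  M (fun k => (x k).1) (fun k => (y k).2) i = 0 -> M (fun k => (y k).1) (fun k => (x k).2) i = 0 ->
  (x i).1 * (y 0%N).2 = (y i).1 * (x 0%N).2 ->
  (Gmul p x y i).2 = (Gmul p y x i).2.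
Proof.
move=> hx hy i0 m1 m2 e; have x0 : (x 0%N).1 = 1 by case/inG_iff: hx.
have y0 : (y 0%N).1 = 1 by case/inG_iff: hy.
rewrite !Gmul_eq /=; try apply: inG_comm => //.
rewrite !cmp_mid // m1 m2 x0 y0 !mulr1 !addr0 e.
by rewrite -!addrA; congr (_ + _); rewrite addrC.
Qed.

Lemma agF_get n (x : ser R) j : agF n x (Gone R) -> (j < n)%N -> x j = ((j == 0%N)%:R, 0).
Proof. by move=> h jn; rewrite h // Gone_eq. Qed.


Lemma pair_eq (u v : R * R) : u.1 = v.1 -> u.2 = v.2 -> u = v.
Proof. by case: u v => ? ? [] ? ? /= -> ->. Qed.

Lemma agH_x1 m (x : ser R) k : agH m.+1 x (Gone R) -> (0 < k)%N -> (k <= m.+1)%N -> (x k).1 = 0.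
Proof.
case=> hF hH k0; rewrite leq_eqVlt => /orP [/eqP -> | km]; first by rewrite hH Gone_eq.
by rewrite (agF_get hF km) /=; case: k k0 {km}.
Qed.

Lemma agF_x m (x : ser R) k : agF m.+1 x (Gone R) -> (0 < k)%N -> (k <= m)%N -> x k = (0, 0).
Proof. by move=> hF k0 km; rewrite (agF_get hF km) /=; case: k k0 {km}. Qed.

Lemma agF_x0 n (x : ser R) : agF n.+1 x (Gone R) -> x 0%N = (1, 0).
Proof. by move=> hF; rewrite (agF_get hF). Qed.

Lemma F1 (x y : ser R) : inG p A x -> inG p A y -> agH 1 (Gmul p x y) (Gmul p y x).
Proof.
move=> hx hy; split; first by case=> // _; apply: comm0.
by apply: comm1_i => //; rewrite /M big_ord0.
Qed.

Lemma F2 (x y : ser R) : inG p A x -> inG p A y -> agH 1 x (Gone R) -> agH 1 y (Gone R) ->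
  agF 3 (Gmul p x y) (Gmul p y x).
Proof.
move=> hx hy ax ay; have x0 := agF_x0 ax.1; have y0 := agF_x0 ay.1.
case=> [_|i]; first exact: comm0.
move=> hi; apply: pair_eq.
  apply: comm1_i => //; apply: M_zero => j j0 ji; left; apply: (agH_x1 (m := 0)) => //; lia.
apply: comm2_i => //; try (apply: M_zero => j j0 ji; left; apply: (agH_x1 (m := 0)) => //; lia).
by rewrite x0 y0 !mulr0.
Qed.

Lemma F3 m (x y : ser R) : inG p A x -> inG p A y -> agF m.+1 x (Gone R) -> agF m.+1 y (Gone R) ->
  agF (2 * m).+2 (Gmul p x y) (Gmul p y x).
Proof.
move=> hx hy ax ay; have x0 := agF_x0 ax; have y0 := agF_x0 ay.
case=> [_|i]; first exact: comm0.
move=> hi; apply: pair_eq.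
  apply: comm1_i => //; apply: M_zero => j j0 ji; case: (leqP j m) => jm.
  - by right; rewrite (agF_x ay) // (agF_x ax).
  - by left; rewrite (agF_x ax) //; lia.
  - by right; rewrite (agF_x ax).
  - by left; rewrite (agF_x ay) //; lia.
apply: comm2_i => //; last by rewrite x0 y0 !mulr0.
  apply: M_zero => j j0 ji; case: (leqP j m) => jm.
  - by right; rewrite (agF_x ay).
  - by left; rewrite (agF_x ax) //; lia.
apply: M_zero => j j0 ji; case: (leqP j m) => jm.
- by right; rewrite (agF_x ax).
- by left; rewrite (agF_x ay) //; lia.
Qed.

Lemma F4 m (x y : ser R) : inG p A x -> inG p A y -> agH m.+1 x (Gone R) ->
  agH m.+2 (Gmul p x y) (Gmul p y x).
Proof.
move=> hx hy ax; have x0 := agF_x0 ax.1.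
split.
  case=> [_|i]; first exact: comm0.
  move=> hi; apply: pair_eq.
    apply: comm1_i => //; apply: M_zero => j j0 ji.
    - by left; rewrite (agF_x ax.1) //; lia.
    - by right; rewrite (agF_x ax.1) //; lia.
  apply: comm2_i => //.
  - by apply: M_zero => j j0 ji; left; rewrite (agF_x ax.1) //; lia.
  - by apply: M_zero => j j0 ji; right; rewrite (agF_x ax.1) //; lia.
  - by rewrite x0 (agH_x1 ax) // mulr0 mul0r.
apply: comm1_i => //; apply: M_zero => j j0 ji.
- by left; apply: (agH_x1 ax); lia.
- by right; apply: (agH_x1 ax); lia.
Qed.


Lemma commg_sub (H P Q : ser R -> Prop) : is_subgroup p A H ->
  (forall x y, P x -> Q y -> H (Gcomm p A x y)) -> forall z, Defs.commg p A P Q z -> H z.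
Proof. by move=> sH hc z hz; apply: (hz H sH) => c [x [y [px qy ->]]]; apply: hc. Qed.

Lemma toGfilt k (x : ser R) : inG p A x /\ agF k.+1 x (Gone R) -> Gfilt p A k x.
Proof.
case=> hx ax; split => //; split; first exact: agF_x0 ax.
by move=> i /andP [i1 ik]; apply: agF_x ax i1 ik.
Qed.

Lemma toGfilt_half k (x : ser R) : inG p A x /\ agH k.+1 x (Gone R) -> Gfilt_half p A k x.
Proof.
case=> hx [ax ax']; split; first exact: toGfilt.
by rewrite ax' Gone_eq.
Qed.

Lemma agF_le n n' (u v : ser R) : (n' <= n)%N -> agF n u v -> agF n' u v.
Proof. by move=> le h i hi; apply: h; apply: leq_trans hi le. Qed.

Lemma D1_H x : Dser p A 1 x -> inG p A x /\ agH 1 x (Gone R).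
Proof.
move=> hx; apply: (commg_sub (subgroup_H _) _ hx) => a b ha hb; split; first exact: Gcomm_inG.
by apply: comm_H => //; apply: F1.
Qed.

Lemma Gser_H k x : Gser p A k.+1 x -> inG p A x /\ agH k.+1 x (Gone R).
Proof.
elim: k x => [|k IH] x; first exact: D1_H.
move=> hx; apply: (commg_sub (subgroup_H _) _ hx) => a b ha hb; have [ia aa] := IH a ha; split; first exact: Gcomm_inG.
by apply: comm_H => //; apply: F4.
Qed.

Lemma Dser_F k x : (0 < k)%N -> Dser p A k.+1 x -> inG p A x /\ agF (2 * k).+1 x (Gone R).
Proof.
elim: k x => [//|k IH] x _ hx.
case: k IH hx => [|k] IH hx.
  apply: (commg_sub (subgroup_F _) _ hx) => a b ha hb; have [ia aa] := D1_H ha; have [ib ab] := D1_H hb.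
  split; first exact: Gcomm_inG.
  by apply: comm_F => //; apply: F2.
apply: (commg_sub (subgroup_F _) _ hx) => a b ha hb; have [ia aa] := IH a isT ha; have [ib ab] := IH b isT hb.
split; first exact: Gcomm_inG.
apply: (agF_le (n := (2 * (2 * k.+1)).+2)); first lia.
by apply: comm_F => //; apply: F3.
Qed.

Lemma main_sec :
  [/\ (forall x, Dser p A 1 x <-> Gser p A 1 x),
      (forall x, Dser p A 1 x -> Gfilt_half p A 0 x) &
      (forall k : nat, (0 < k)%N ->
         (forall x, Dser p A k.+1 x -> Gfilt p A (2 * k) x) /\
         (forall x, Gser p A k.+1 x -> Gfilt_half p A k x))].
Proof.
split.
- by move=> x; split.
- by move=> x hx; apply: toGfilt_half; apply: D1_H.
- move=> k k0; split => x hx.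
    by apply: toGfilt; apply: Dser_F.
  by apply: toGfilt_half; apply: Gser_H.
Qed.

End Main.

Theorem corollary3p3 (p : nat) (R : pzRingType) (A : int -> {pred R}) :
  prime p -> (p%:R : R) = 0 -> graded_comm_alg A ->
  [/\ (forall x, Dser p A 1 x <-> Gser p A 1 x),
      (forall x, Dser p A 1 x -> Gfilt_half p A 0 x) &
      (forall k : nat, (0 < k)%N ->
         (forall x, Dser p A k.+1 x -> Gfilt p A (2 * k) x) /\
         (forall x, Gser p A k.+1 x -> Gfilt_half p A k x))].
Proof. by move=> pr pR gc; apply: main_sec. Qed.
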